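(* Let $\mathcal U$ be a finite nonempty set, $\epsilon_1,\epsilon_2\in(0,1]$, $n_b$ a positive integer, and for each $v\in\mathcal U$ let $a_v\ge0$ be an integer, $\mu_v\in\mathbb R$ and $\sigma_v^2\ge0$. For $p\in[\max\{\epsilon_1,\epsilon_2\},1]$ define $$h_v(p)=\Big(\frac1{\epsilon_2}-\frac1p\Big)a_v^2\mu_v^2n_b+\Big(\frac1{\epsilon_1}-\frac1p\Big)a_v(\mu_v^2+\sigma_v^2)n_b^2+\Big(\frac{p}{\epsilon_1\epsilon_2}-\frac1{\epsilon_1}-\frac1{\epsilon_2}+\frac1p\Big)a_v(\mu_v^2+\sigma_v^2)n_b+\Big(\frac1p-1\Big)a_v^2\mu_v^2n_b^2,$$ $h^*(p)=\max_{v\in\mathcal U}h_v(p)$, and $h'(p)=\max\{h_{v_1}(p),h_{v_2}(p)\}$, where $v_1\in\arg\max_v a_v^2\mu_v^2$ and $v_2\in\arg\max_v a_v(\mu_v^2+\sigma_v^2)$. Then for every $p\in[\max\{\epsilon_1,\epsilon_2\},1]$, $$\frac{h^*(p)}{2}\le h'(p)\le h^*(p).$$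
   Context: Interpretation: $h_v(p)$ is the variance of the SUM join estimator when both tables use universe sampling rate $p$ and uniform sampling rates $\epsilon_1/p$, $\epsilon_2/p$, and all $n_b$ tuples of the second table $T_2$ have join value $v$; $a_v$ is the number of tuples of $T_1$ with join value $v$, and $\mu_v,\sigma_v^2$ are the mean and variance of the aggregated column over those tuples. *)

(* Defs.v *)
From mathcomp Require Import all_boot all_order all_algebra.
Set Implicit Arguments. Unset Strict Implicit. Unset Printing Implicit Defensive.
Import Order.TTheory GRing.Theory Num.Theory.
Local Open Scope ring_scope.

(* h_v(p): variance of the SUM join estimator for join value v. *)
Definition hv {R : realFieldType} (e1 e2 : R) (nb : nat) (a : nat) (mu s2 : R)
  (p : R) : R :=
  (e2^-1 - p^-1) * (a%:R ^+ 2 * mu ^+ 2) * nb%:R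
  + (e1^-1 - p^-1) * (a%:R * (mu ^+ 2 + s2)) * nb%:R ^+ 2
  + (p / (e1 * e2) - e1^-1 - e2^-1 + p^-1) * (a%:R * (mu ^+ 2 + s2)) * nb%:R
  + (p^-1 - 1) * (a%:R ^+ 2 * mu ^+ 2) * nb%:R ^+ 2.

(* h*(p) = max_{v in U} h_v(p); u0 is any element of the nonempty finite U
   (used only as the seed of the fold; the value does not depend on it). *)
Definition hstar {R : realFieldType} {U : finType} (u0 : U) (e1 e2 : R) (nb : nat)
  (a : U -> nat) (mu s2 : U -> R) (p : R) : R :=
  \big[Num.max/hv e1 e2 nb (a u0) (mu u0) (s2 u0) p]_(v : U)
     hv e1 e2 nb (a v) (mu v) (s2 v) p.

Definition hprime {R : realFieldType} {U : finType} (v1 v2 : U) (e1 e2 : R) (nb : nat)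
  (a : U -> nat) (mu s2 : U -> R) (p : R) : R :=
  Num.max (hv e1 e2 nb (a v1) (mu v1) (s2 v1) p) (hv e1 e2 nb (a v2) (mu v2) (s2 v2) p).

(* Main.v *)
Require Import Defs.
From mathcomp Require Import all_boot all_order all_algebra.
From mathcomp Require Import ring lra.
Import Order.TTheory GRing.Theory Num.Theory.
Local Open Scope ring_scope.

Lemma hv_decomp (R : realFieldType) (e1 e2 : R) nb a mu s2 p :
  e1 != 0 -> e2 != 0 -> p != 0 ->
  hv e1 e2 nb a mu s2 p =
  (a%:R ^+ 2 * mu ^+ 2) * ((e2^-1 - p^-1) * nb%:R + (p^-1 - 1) * nb%:R ^+ 2)
  + (a%:R * (mu ^+ 2 + s2)) * ((e1^-1 - p^-1) * nb%:R ^+ 2 +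
       ((p - e1) * (p - e2) / (p * e1 * e2)) * nb%:R).
Proof. move=> h1 h2 hp; rewrite /hv; field; by rewrite h1 h2 hp. Qed.

Lemma le_bigmax_seq (R : realFieldType) (U : eqType) (F : U -> R) x0 (s : seq U) i :
  i \in s -> F i <= \big[Num.max/x0]_(v <- s) F v.
Proof.
elim: s => // x s IH; rewrite in_cons big_cons le_max => /orP [/eqP -> | /IH ->].
  by rewrite lexx.
by rewrite orbT.
Qed.

Lemma bigmax_le_seq (R : realFieldType) (U : eqType) (F : U -> R) x0 (s : seq U) M :
  x0 <= M -> (forall i, F i <= M) -> \big[Num.max/x0]_(v <- s) F v <= M.
Proof.
move=> h0 hF; elim: s => [|x s IH]; first by rewrite big_nil.
by rewrite big_cons ge_max hF IH.
Qed.

Theorem lemma7 (R : realFieldType) (U : finType) (u0 : U)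
  (e1 e2 : R) (nb : nat) (a : U -> nat) (mu s2 : U -> R) (v1 v2 : U) (p : R) :
  0 < e1 -> e1 <= 1 -> 0 < e2 -> e2 <= 1 -> (0 < nb)%N ->
  (forall v, 0 <= s2 v) ->
  (forall v, (a v)%:R ^+ 2 * mu v ^+ 2 <= (a v1)%:R ^+ 2 * mu v1 ^+ 2) ->
  (forall v, (a v)%:R * (mu v ^+ 2 + s2 v) <= (a v2)%:R * (mu v2 ^+ 2 + s2 v2)) ->
  Num.max e1 e2 <= p -> p <= 1 ->
  hstar u0 e1 e2 nb a mu s2 p / 2 <= hprime v1 v2 e1 e2 nb a mu s2 p
  /\ hprime v1 v2 e1 e2 nb a mu s2 p <= hstar u0 e1 e2 nb a mu s2 p.
Proof.
move=> he1 he1' he2 he2' hnb hs hA hB; rewrite ge_max => /andP [hp1 hp2] hp.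
have hp0 : 0 < p by apply: lt_le_trans hp1.
set F := fun v => hv e1 e2 nb (a v) (mu v) (s2 v) p.
have hstE : hstar u0 e1 e2 nb a mu s2 p = \big[Num.max/F u0]_(v <- index_enum U) F v.
  by rewrite /hstar unlock.
have hprE : hprime v1 v2 e1 e2 nb a mu s2 p = Num.max (F v1) (F v2) by [].
rewrite hstE hprE; split; last first.
  by rewrite ge_max !le_bigmax_seq // mem_index_enum.
set c1 := (e2^-1 - p^-1) * nb%:R + (p^-1 - 1) * nb%:R ^+ 2.
set c2 := (e1^-1 - p^-1) * nb%:R ^+ 2 + ((p - e1) * (p - e2) / (p * e1 * e2)) * nb%:R.
have hFE : forall v, F v = (a v)%:R ^+ 2 * mu v ^+ 2 * c1 + (a v)%:R * (mu v ^+ 2 + s2 v) * c2.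
  move=> v; rewrite /F hv_decomp //; [exact: lt0r_neq0 | exact: lt0r_neq0 | exact: lt0r_neq0].
have hn : 0 <= nb%:R :> R by rewrite ler0n.
have hinv : forall e, 0 < e -> e <= p -> p^-1 <= e^-1.
  by move=> e he hep; rewrite lef_pV2 ?posrE.
have ip1 : p^-1 <= e1^-1 by apply: hinv.
have ip2 : p^-1 <= e2^-1 by apply: hinv.
have ip3 : 1 <= p^-1 by rewrite invr_ge1 // ?unitf_gt0.
have c1ge : 0 <= c1.
  rewrite /c1; apply: addr_ge0; apply: mulr_ge0; rewrite ?subr_ge0 ?exprn_ge0 //.
have c2ge : 0 <= c2.
  rewrite /c2; apply: addr_ge0; apply: mulr_ge0; rewrite ?subr_ge0 ?exprn_ge0 //.
  apply: divr_ge0; [apply: mulr_ge0 | apply: mulr_ge0; [apply: mulr_ge0|]];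
    rewrite ?subr_ge0 // ltW //.
have hA0 : forall v, 0 <= (a v)%:R ^+ 2 * mu v ^+ 2 :> R.
  by move=> v; rewrite mulr_ge0 // sqr_ge0.
have hB0 : forall v, 0 <= (a v)%:R * (mu v ^+ 2 + s2 v) :> R.
  by move=> v; rewrite mulr_ge0 // ?ler0n // addr_ge0 // sqr_ge0.
have key : forall v, F v <= F v1 + F v2.
  move=> v; rewrite !hFE.
  have := ler_wpM2r c1ge (hA v); have := ler_wpM2r c2ge (hB v).
  have := mulr_ge0 (hB0 v1) c2ge; have := mulr_ge0 (hA0 v2) c1ge.
  lra.
have hM : Num.max (F v1) (F v2) * 2 >= F v1 + F v2.
  have h1 : F v1 <= Num.max (F v1) (F v2) by rewrite le_max lexx.
  have h2 : F v2 <= Num.max (F v1) (F v2) by rewrite le_max lexx orbT.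
  lra.
rewrite ler_pdivrMr //.
apply: bigmax_le_seq => [|i]; apply: le_trans hM; exact: key.
Qed.
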